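(* Let $\mathbf{A}$ be a finite idempotent algebra, $B$ a subuniverse of $\mathbf{A}$, and $C,D\subseteq A$. Then $(C,D)$ is a $B$-blocker of $\mathbf{A}$ if and only if: (1) $D$ is a subuniverse of $\mathbf{A}$; (2) $\emptyset\neq C\subseteq D$; (3) $C\cap B=\emptyset$; (4) $D\cap B\neq\emptyset$; and (5') for each basic operation $t$ of $\mathbf{A}$, of arity $s$ say, there is an index $i\in\{1,\dots,s\}$ such that $t(d_1,\dots,d_s)\in C$ whenever $d_j\in D$ for all $j$ and $d_i\in C$.
   Context: $B$-blocker: a pair $(C,D)$ of subsets of $A$ such that (1) $D$ is a subuniverse of $\mathbf{A}$; (2) $\emptyset\neq C\subseteq D$; (3) $C\cap B=\emptyset$; (4) $D\cap B\neq\emptyset$; (5) for every $n\ge 1$, $D^n\setminus (D\setminus C)^n$ is a subuniverse of $\mathbf{A}^n$. An algebra is idempotent if every basic operation $f$ satisfies $f(x,\dots,x)\approx x$. *)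

(* Defs.v *)
From mathcomp Require Import all_boot.
Set Implicit Arguments. Unset Strict Implicit. Unset Printing Implicit Defensive.

(* An algebra on carrier T is given by a type I of operation symbols,
   an arity function ar, and for each symbol i an operation
   op i : T^(ar i) -> T, where T^k is represented as 'I_k -> T. *)

Definition idempotent_alg (T : Type) (I : Type) (ar : I -> nat)
  (op : forall i, ('I_(ar i) -> T) -> T) : Prop :=
  forall i (x : T), op i (fun _ => x) = x.

Definition subuniverse (T : Type) (I : Type) (ar : I -> nat)
  (op : forall i, ('I_(ar i) -> T) -> T) (S : T -> Prop) : Prop :=
  forall i (a : 'I_(ar i) -> T), (forall j, S (a j)) -> S (op i a).

Definition pow_op (T : Type) (I : Type) (ar : I -> nat)
  (op : forall i, ('I_(ar i) -> T) -> T) (n : nat) :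
  forall i, ('I_(ar i) -> ('I_n -> T)) -> ('I_n -> T) :=
  fun i a k => op i (fun j => a j k).

Definition blocker (T : finType) (I : Type) (ar : I -> nat)
  (op : forall i, ('I_(ar i) -> T) -> T) (B C D : {set T}) : Prop :=
  [/\ subuniverse op (fun x => x \in D),
      C != set0 /\ C \subset D,
      C :&: B = set0,
      D :&: B != set0 &
      forall n : nat, 1 <= n ->
        subuniverse (@pow_op T I ar op n)
          (fun x : 'I_n -> T =>
             (forall k, x k \in D) /\ ~ (forall k, x k \in D :\: C))].

(* Main.v *)
Require Import Defs.
From mathcomp Require Import all_boot.
From Stdlib Require Import Classical ClassicalEpsilon FunctionalExtensionality.

Theorem lemma4p6 (T : finType) (I : Type) (ar : I -> nat)
  (op : forall i, ('I_(ar i) -> T) -> T)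
  (Hidem : idempotent_alg op)
  (B C D : {set T}) (HB : subuniverse op (fun x => x \in B)) :
  blocker op B C D <->
  [/\ subuniverse op (fun x => x \in D),
      C != set0 /\ C \subset D,
      C :&: B = set0,
      D :&: B != set0 &
      forall t : I, exists i : 'I_(ar t),
        forall d : 'I_(ar t) -> T,
          (forall j, d j \in D) -> d i \in C -> op t d \in C].
Proof.
split.
- case=> HD [HC0 HCD] HCB HDB H5; split => // t.
  apply: NNPP => Hn.
  have Hall : forall i : 'I_(ar t), exists d : 'I_(ar t) -> T,
      (forall j, d j \in D) /\ d i \in C /\ op t d \notin C.
    move=> i; apply: NNPP => Hn2; apply: Hn; exists i => d Hd Hdi.
    apply: NNPP => Hc; apply: Hn2; exists d; split => //; split => //.
    by apply/negP.
  case: (posnP (ar t)) => Har.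
  + (* nullary: contradiction with idempotence *)
    case/set0Pn: HC0 => c Hc; case/set0Pn: HDB => b /setIP [_ Hb].
    have Heq : (fun _ : 'I_(ar t) => c) = (fun _ => b).
      apply: functional_extensionality => j; have Hj : (nat_of_ord j < 0)%N by apply: leq_trans (ltn_ord j) _; rewrite Har.
      by [].
    have E : c = b by rewrite -(Hidem t c) -(Hidem t b) Heq.
    have : c \in C :&: B by rewrite inE Hc E Hb.
    by rewrite HCB inE.
  + pose dd := fun i => proj1_sig (constructive_indefinite_description _ (Hall i)).
    have Hdd : forall i, (forall j, dd i j \in D) /\ dd i i \in C /\ op t (dd i) \notin C
      := fun i => proj2_sig (constructive_indefinite_description _ (Hall i)).
    have := H5 (ar t) Har t (fun j k => dd k j).
    case.
    * move=> j; split; first by move=> k; case: (Hdd k) => ->.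
      move=> Hk; have := Hk j; rewrite inE; case: (Hdd j) => _ [-> _] //.
    * move=> _ Hnot; apply: Hnot => k; rewrite /pow_op inE.
      case: (Hdd k) => H1 [_ H3]; rewrite H3 /=.
      apply: HD => j; exact: H1.
- case=> HD HC HCB HDB H5'; split => // n _ t a Ha; split.
  + move=> k; rewrite /pow_op; apply: HD => j; by case: (Ha j) => ->.
  + case: (H5' t) => i Hi.
    case: (Ha i) => HaD Hnot.
    have [k Hk] : exists k, a i k \in C.
      apply: NNPP => Hn; apply: Hnot => k; rewrite inE HaD andbT.
      apply/negP => Hc; apply: Hn; by exists k.
    move=> Hall; have := Hall k; rewrite inE /pow_op Hi //.
    by move=> j; case: (Ha j) => ->.
Qed.
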